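(* Let $d\geqslant 5$ be an integer and let $r$ be an integer with $\gcd(d,r)=1$. Let $a\geqslant 1$ be an integer and $n=ad-r$, and assume $n\geqslant r$. Suppose that $2r+kd\equiv 0\pmod{n}$ for some integer $k>0$. Then $k\geqslant a(d-4)/2$. *)

(* Defs.v *)
From Stdlib Require Import ZArith Reals.

(* Main.v *)
Require Import Defs.
From Stdlib Require Import ZArith Reals Znumtheory Lia Lra Psatz.

Theorem lemma1 (d r a n k : Z)
  (hd : (5 <= d)%Z)
  (hgcd : Z.gcd d r = 1%Z)
  (ha : (1 <= a)%Z)
  (hn : n = (a * d - r)%Z)
  (hnr : (r <= n)%Z)
  (hk : (0 < k)%Z)
  (hdiv : (n | 2 * r + k * d)%Z) :
  (IZR k >= IZR a * (IZR d - 4) / 2)%R.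
Proof.
  destruct hdiv as [m hm].
  assert (H1 : (d | r * (m + 2))%Z).
  { exists (m * a - k)%Z. subst n. nia. }
  apply Z.gauss in H1; [| exact hgcd].
  destruct H1 as [t ht].
  assert (Hrt : (r * t = m * a - k)%Z).
  { assert (E : (d * (r * t) = d * (m * a - k))%Z) by (subst n; nia).
    apply Z.mul_reg_l in E; lia. }
  assert (Hk : (k = t * n - 2 * a)%Z) by (subst n; nia).
  assert (Hnpos : (0 < n)%Z) by nia.
  assert (Ht : (1 <= t)%Z) by nia.
  assert (Hfin : (a * (d - 4) <= 2 * k)%Z) by nia.
  apply IZR_le in Hfin. rewrite mult_IZR, minus_IZR, mult_IZR in Hfin.
  simpl in Hfin. lra.
Qed.
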